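(* The functors $I$ and $J$ on the category $\mathbf{Comp}$ of compact Hausdorff spaces and continuous maps are isomorphic; that is, there exist homeomorphisms $k_X\colon I(X)\to J(X)$, one for each compact Hausdorff space $X$, such that $J(f)\circ k_X=k_Y\circ I(f)$ for every continuous map $f\colon X\to Y$.
   Context: A max-min measure on a compact Hausdorff space $X$ is a functional $\mu\colon C(X)\to\mathbb R$ (not assumed continuous) with $\mu(c_X)=c$ for constants, $\mu(\varphi\vee\psi)=\mu(\varphi)\vee\mu(\psi)$, $\mu(c\wedge\varphi)=c\wedge\mu(\varphi)$ for $c\in\mathbb R$. A max-plus (idempotent) measure is a functional $\mu\colon C(X)\to\mathbb R$ with $\mu(c_X)=c$, $\mu(\varphi\vee\psi)=\mu(\varphi)\vee\mu(\psi)$, $\mu(c_X+\varphi)=c+\mu(\varphi)$. $J(X)$, resp. $I(X)$, is the set of max-min, resp. max-plus, measures with the topology of pointwise convergence on $C(X)$. For a continuous $f\colon X\to Y$, $J(f)(\mu)(\varphi)=\mu(\varphi\circ f)$ and $I(f)(\mu)(\varphi)=\mu(\varphi\circ f)$. *)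

(* Defs.v *)
From Stdlib Require Import Reals List.
Import ListNotations.
Open Scope R_scope.

Definition is_topology {A : Type} (O : (A -> Prop) -> Prop) : Prop :=
  O (fun _ => True) /\
  (forall U V, O U -> O V -> O (fun a => U a /\ V a)) /\
  (forall F : (A -> Prop) -> Prop, (forall U, F U -> O U) ->
     O (fun a => exists U, F U /\ U a)).

Definition compact {A : Type} (O : (A -> Prop) -> Prop) : Prop :=
  forall F : (A -> Prop) -> Prop,
    (forall U, F U -> O U) ->
    (forall a, exists U, F U /\ U a) ->
    exists l : list (A -> Prop), Forall F l /\ (forall a, exists U, In U l /\ U a).

Definition hausdorff {A : Type} (O : (A -> Prop) -> Prop) : Prop :=
  forall x y : A, x <> y ->
    exists U V, O U /\ O V /\ U x /\ V y /\ (forall z, ~ (U z /\ V z)).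

Definition continuous {A B : Type} (OA : (A -> Prop) -> Prop)
  (OB : (B -> Prop) -> Prop) (f : A -> B) : Prop :=
  forall V, OB V -> OA (fun a => V (f a)).

Definition is_homeomorphism {A B : Type} (OA : (A -> Prop) -> Prop)
  (OB : (B -> Prop) -> Prop) (f : A -> B) : Prop :=
  exists g : B -> A,
    (forall a, g (f a) = a) /\ (forall b, f (g b) = b) /\
    continuous OA OB f /\ continuous OB OA g.

Definition R_open (U : R -> Prop) : Prop :=
  forall x, U x -> exists eps, 0 < eps /\ forall y, Rabs (y - x) < eps -> U y.

Record CompHaus : Type := {
  carrier :> Type;
  opens : (carrier -> Prop) -> Prop;
  opens_topology : is_topology opens;
  opens_compact : compact opens;
  opens_hausdorff : hausdorff opens }.

Definition cmap (X Y : CompHaus) : Type :=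
  {f : X -> Y | continuous (opens X) (opens Y) f}.

Definition Cfun (X : CompHaus) : Type :=
  {phi : X -> R | continuous (opens X) R_open phi}.

Lemma continuous_comp {A B C : Type} (OA : (A -> Prop) -> Prop)
  (OB : (B -> Prop) -> Prop) (OC : (C -> Prop) -> Prop) (f : A -> B) (g : B -> C) :
  continuous OA OB f -> continuous OB OC g -> continuous OA OC (fun a => g (f a)).
Proof. intros hf hg V hV. exact (hf _ (hg V hV)). Qed.

Definition precomp {X Y : CompHaus} (f : cmap X Y) (psi : Cfun Y) : Cfun X :=
  exist _ (fun x => proj1_sig psi (proj1_sig f x))
    (continuous_comp _ _ _ _ _ (proj2_sig f) (proj2_sig psi)).

(* The operations c_X, phi \/ psi, c + phi, c /\ phi on C(X) are expressed
   pointwise: "chi is (pointwise) the function ..." *)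

Definition is_maxplus (X : CompHaus) (mu : Cfun X -> R) : Prop :=
  (forall (c : R) (phi : Cfun X), (forall x, proj1_sig phi x = c) -> mu phi = c) /\
  (forall phi psi chi : Cfun X,
     (forall x, proj1_sig chi x = Rmax (proj1_sig phi x) (proj1_sig psi x)) ->
     mu chi = Rmax (mu phi) (mu psi)) /\
  (forall (c : R) (phi chi : Cfun X),
     (forall x, proj1_sig chi x = c + proj1_sig phi x) -> mu chi = c + mu phi).

Definition is_maxmin (X : CompHaus) (mu : Cfun X -> R) : Prop :=
  (forall (c : R) (phi : Cfun X), (forall x, proj1_sig phi x = c) -> mu phi = c) /\
  (forall phi psi chi : Cfun X,
     (forall x, proj1_sig chi x = Rmax (proj1_sig phi x) (proj1_sig psi x)) ->
     mu chi = Rmax (mu phi) (mu psi)) /\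
  (forall (c : R) (phi chi : Cfun X),
     (forall x, proj1_sig chi x = Rmin c (proj1_sig phi x)) -> mu chi = Rmin c (mu phi)).

Definition IX (X : CompHaus) : Type := {mu : Cfun X -> R | is_maxplus X mu}.
Definition JX (X : CompHaus) : Type := {mu : Cfun X -> R | is_maxmin X mu}.

(* Topology of pointwise convergence on a set of functionals {mu | P mu}:
   W is open iff each mu in W has a basic neighbourhood
   {nu | nu(phi_i) in U_i, i=1..n} (U_i open in R) contained in W. *)
Definition pointwise_open {A : Type} (P : (A -> R) -> Prop)
  (W : {mu : A -> R | P mu} -> Prop) : Prop :=
  forall mu, W mu ->
    exists l : list (A * (R -> Prop)),
      Forall (fun p => R_open (snd p)) l /\
      Forall (fun p => snd p (proj1_sig mu (fst p))) l /\
      (forall nu, Forall (fun p => snd p (proj1_sig nu (fst p))) l -> W nu).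

Definition I_open (X : CompHaus) := pointwise_open (is_maxplus X).
Definition J_open (X : CompHaus) := pointwise_open (is_maxmin X).

Lemma maxplus_precomp (X Y : CompHaus) (f : cmap X Y) (mu : Cfun X -> R) :
  is_maxplus X mu -> is_maxplus Y (fun psi => mu (precomp f psi)).
Proof.
  intros [h1 [h2 h3]]; split; [|split].
  - intros c phi H. apply h1. intros x. simpl. apply H.
  - intros phi psi chi H. apply h2. intros x. simpl. apply H.
  - intros c phi chi H. apply h3. intros x. simpl. apply H.
Qed.

Lemma maxmin_precomp (X Y : CompHaus) (f : cmap X Y) (mu : Cfun X -> R) :
  is_maxmin X mu -> is_maxmin Y (fun psi => mu (precomp f psi)).
Proof.
  intros [h1 [h2 h3]]; split; [|split].
  - intros c phi H. apply h1. intros x. simpl. apply H.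
  - intros phi psi chi H. apply h2. intros x. simpl. apply H.
  - intros c phi chi H. apply h3. intros x. simpl. apply H.
Qed.

Definition Imap {X Y : CompHaus} (f : cmap X Y) (mu : IX X) : IX Y :=
  exist _ (fun psi => proj1_sig mu (precomp f psi))
    (maxplus_precomp X Y f _ (proj2_sig mu)).

Definition Jmap {X Y : CompHaus} (f : cmap X Y) (mu : JX X) : JX Y :=
  exist _ (fun psi => proj1_sig mu (precomp f psi))
    (maxmin_precomp X Y f _ (proj2_sig mu)).

(* Main.v *)
Require Import Defs.
From Stdlib Require Import Reals List Lra Lia Psatz ClassicalEpsilon ProofIrrelevance FunctionalExtensionality PropExtensionality Classical.
Import ListNotations.
Open Scope R_scope.

Lemma le_eps (a b : R) : (forall e, 0 < e -> b - e <= a) -> b <= a.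
Proof.
  intros H. destruct (Rlt_or_le a b) as [h|h]; [|lra].
  assert (0 < (b-a)/2) by lra. specialize (H _ H0). lra.
Qed.

Definition g (r : R) : R := (r - sqrt (r*r + 4)) / 2.
Definition ginv (b : R) : R := b - 1/b.

Lemma sqf r : 0 <= sqrt (r*r+4) /\ sqrt (r*r+4) * sqrt (r*r+4) = r*r+4.
Proof. split. apply sqrt_pos. apply sqrt_sqrt. nra. Qed.

Lemma sq_gt r : r < sqrt (r*r+4) /\ - r < sqrt (r*r+4).
Proof. destruct (sqf r) as [h1 h2]. split; nra. Qed.

Lemma g_neg r : g r < 0.
Proof. unfold g. destruct (sq_gt r). lra. Qed.

Lemma g_lt x y : x < y -> g x < g y.
Proof.
  intros h. unfold g. destruct (sqf x) as [a1 a2]. destruct (sqf y) as [b1 b2].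
  destruct (sq_gt x) as [c1 c2]. destruct (sq_gt y) as [d1 d2].
  set (A := sqrt (x*x+4)) in *. set (B := sqrt (y*y+4)) in *.
  assert (B - A < y - x).
  { assert ((B - A) * (A + B) = (y - x) * (y + x)) by nra.
    assert (0 < A + B) by lra.
    nra. }
  lra.
Qed.

Lemma g_le x y : x <= y -> g x <= g y.
Proof. intros [h|h]. left; apply g_lt; auto. subst; lra. Qed.

Lemma g_lip x y : x <= y -> g y - g x <= y - x.
Proof.
  intros h. unfold g. destruct (sqf x) as [a1 a2]. destruct (sqf y) as [b1 b2].
  destruct (sq_gt x) as [c1 c2]. destruct (sq_gt y) as [d1 d2].
  set (A := sqrt (x*x+4)) in *. set (B := sqrt (y*y+4)) in *.
  assert (A - B <= y - x).
  { assert ((A - B) * (A + B) = (x - y) * (x + y)) by nra.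
    assert (0 < A + B) by lra.
    nra. }
  lra.
Qed.

Lemma g_ginv b : b < 0 -> g (ginv b) = b.
Proof.
  intros hb. unfold g, ginv.
  assert (E : (b - 1/b) * (b - 1/b) + 4 = (-(b + 1/b)) * (-(b + 1/b))) by (field; lra).
  rewrite E. rewrite sqrt_square.
  - field; lra.
  - assert (b * (1/b) = 1) by (field; lra).
    assert (1/b < 0). { unfold Rdiv. rewrite Rmult_1_l. apply Rinv_lt_0_compat. lra. }
    lra.
Qed.

Definition lip (h : R -> R) := exists L, 0 <= L /\ forall x y, Rabs (h x - h y) <= L * Rabs (x - y).

Lemma lip_const c : lip (fun _ => c).
Proof. exists 0. split; [lra|]. intros. rewrite Rminus_diag, Rabs_R0. pose proof (Rabs_pos (x-y)). nra. Qed.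
Lemma lip_id : lip (fun y => y).
Proof. exists 1. split; [lra|]. intros. lra. Qed.
Lemma lip_plus f h : lip f -> lip h -> lip (fun y => f y + h y).
Proof.
  intros [L1 [p1 H1]] [L2 [p2 H2]]. exists (L1+L2). split; [lra|]. intros x y.
  specialize (H1 x y); specialize (H2 x y).
  replace (f x + h x - (f y + h y)) with ((f x - f y) + (h x - h y)) by ring.
  eapply Rle_trans. apply Rabs_triang. lra.
Qed.
Lemma lip_minus f h : lip f -> lip h -> lip (fun y => f y - h y).
Proof.
  intros [L1 [p1 H1]] [L2 [p2 H2]]. exists (L1+L2). split; [lra|]. intros x y.
  specialize (H1 x y); specialize (H2 x y).
  replace (f x - h x - (f y - h y)) with ((f x - f y) + - (h x - h y)) by ring.
  eapply Rle_trans. apply Rabs_triang. rewrite Rabs_Ropp. lra.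
Qed.
Lemma lip_scal c f : lip f -> lip (fun y => c * f y).
Proof.
  intros [L [p H]]. exists (Rabs c * L). split. pose proof (Rabs_pos c); nra.
  intros x y. replace (c * f x - c * f y) with (c * (f x - f y)) by ring.
  rewrite Rabs_mult. specialize (H x y). pose proof (Rabs_pos c). nra.
Qed.
Lemma abs_facts x : x <= Rabs x /\ - x <= Rabs x.
Proof. split. apply Rle_abs. rewrite <- Rabs_Ropp. apply Rle_abs. Qed.
Lemma Rmin_lip a b c d : Rabs (Rmin a b - Rmin c d) <= Rmax (Rabs (a - c)) (Rabs (b - d)).
Proof.
  destruct (abs_facts (a-c)), (abs_facts (b-d)).
  pose proof (Rmax_l (Rabs (a - c)) (Rabs (b - d))). pose proof (Rmax_r (Rabs (a - c)) (Rabs (b - d))).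
  set (M := Rmax (Rabs (a - c)) (Rabs (b - d))) in *.
  apply Rabs_le. unfold Rmin. destruct (Rle_dec a b), (Rle_dec c d); split; lra.
Qed.
Lemma Rmax_lip a b c d : Rabs (Rmax a b - Rmax c d) <= Rmax (Rabs (a - c)) (Rabs (b - d)).
Proof.
  destruct (abs_facts (a-c)), (abs_facts (b-d)).
  pose proof (Rmax_l (Rabs (a - c)) (Rabs (b - d))). pose proof (Rmax_r (Rabs (a - c)) (Rabs (b - d))).
  set (M := Rmax (Rabs (a - c)) (Rabs (b - d))) in *.
  apply Rabs_le. unfold Rmax. destruct (Rle_dec a b), (Rle_dec c d); split; lra.
Qed.
Lemma lip_min f h : lip f -> lip h -> lip (fun y => Rmin (f y) (h y)).
Proof.
  intros [L1 [p1 H1]] [L2 [p2 H2]]. exists (L1+L2). split; [lra|]. intros x y.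
  specialize (H1 x y); specialize (H2 x y). pose proof (Rabs_pos (x-y)).
  eapply Rle_trans. apply Rmin_lip. unfold Rmax; destruct Rle_dec; nra.
Qed.
Lemma lip_max f h : lip f -> lip h -> lip (fun y => Rmax (f y) (h y)).
Proof.
  intros [L1 [p1 H1]] [L2 [p2 H2]]. exists (L1+L2). split; [lra|]. intros x y.
  specialize (H1 x y); specialize (H2 x y). pose proof (Rabs_pos (x-y)).
  eapply Rle_trans. apply Rmax_lip. unfold Rmax at 1; destruct Rle_dec; nra.
Qed.

Ltac lipt := match goal with
  | |- lip (fun _ => ?c) => apply lip_const
  | |- lip (fun y => y) => apply lip_id
  | |- lip (fun y => Rmin (@?f y) (@?h y)) => apply (lip_min f h); lipt
  | |- lip (fun y => Rmax (@?f y) (@?h y)) => apply (lip_max f h); lipt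
  | |- lip (fun y => @?f y + @?h y) => apply (lip_plus f h); lipt
  | |- lip (fun y => @?f y - @?h y) => apply (lip_minus f h); lipt
  | |- lip (fun y => ?c * @?f y) => apply (lip_scal c f); lipt
  end.

Lemma lip_test K r c : lip (fun y => c + K * Rmin (y - r) 0).
Proof. lipt. Qed.

Lemma lip_cont h : lip h -> continuous R_open R_open h.
Proof.
  intros [L [pL H]] V hV y hy. destruct (hV _ hy) as [e [he He]].
  exists (e / (L+1)). split. apply Rdiv_lt_0_compat; lra.
  intros z hz. apply He. eapply Rle_lt_trans. apply H.
  apply Rmult_lt_compat_l with (r := L+1) in hz; [|lra].
  replace ((L+1) * (e/(L+1))) with e in hz by (field; lra).
  pose proof (Rabs_pos (z-y)). nra.
Qed.

Definition cfh {X : CompHaus} (phi : Cfun X) (h : R -> R) (H : lip h) : Cfun X :=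
  exist _ (fun x => h (proj1_sig phi x))
    (continuous_comp _ _ _ _ _ (proj2_sig phi) (lip_cont h H)).

Definition sup (E : R -> Prop) : R := epsilon (inhabits 0) (fun m => is_lub E m).

Lemma lub_unique E a b : is_lub E a -> is_lub E b -> a = b.
Proof. intros [h1 h2] [h3 h4]. apply Rle_antisym; auto. Qed.

Lemma sup_eq E m : is_lub E m -> sup E = m.
Proof.
  intros h. apply (lub_unique E). 2: exact h. unfold sup. apply epsilon_spec. eauto.
Qed.

Lemma sup_spec E : (exists m, is_upper_bound E m) -> (exists x, E x) -> is_lub E (sup E).
Proof.
  intros h1 h2. destruct (completeness E h1 h2) as [m hm]. rewrite (sup_eq E m hm). exact hm.
Qed.

Lemma cf_bounded {X : CompHaus} (phi : Cfun X) : exists M, forall x, Rabs (proj1_sig phi x) <= M.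
Proof.
  pose (F := fun U : X -> Prop => exists n : nat, U = (fun x => Rabs (proj1_sig phi x) < INR n)).
  assert (hF : forall U, F U -> opens X U).
  { intros U [n ->]. apply (proj2_sig phi (fun y => Rabs y < INR n)).
    intros y hy. exists (INR n - Rabs y). split; [lra|]. intros z hz.
    pose proof (Rabs_triang_inv z y). pose proof (Rabs_triang (z - y) y).
    replace (z - y + y) with z in H0 by ring. lra. }
  assert (hC : forall a, exists U, F U /\ U a).
  { intros a. destruct (INR_unbounded (Rabs (proj1_sig phi a))) as [n hn].
    exists (fun x => Rabs (proj1_sig phi x) < INR n). split; [exists n; reflexivity|]. simpl. lra. }
  destruct (opens_compact X F hF hC) as [l [hl hcov]].
  assert (exists M, forall U, In U l -> forall x, U x -> Rabs (proj1_sig phi x) <= M) as [M hM].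
  { clear hcov. induction l as [|U l IH].
    - exists 0. intros U [].
    - inversion hl; subst. destruct (IH H2) as [M hM]. destruct H1 as [n ->].
      exists (Rmax M (INR n)). intros U [<-|hU] x hx.
      + simpl in hx. pose proof (Rmax_r M (INR n)). lra.
      + pose proof (hM U hU x hx). pose proof (Rmax_l M (INR n)). lra. }
  exists M. intros x. destruct (hcov x) as [U [hU hx]]. eauto.
Qed.


Ltac mm := unfold Rmin, Rmax in *;
  repeat match goal with
         | |- context [Rle_dec ?a ?b] => destruct (Rle_dec a b)
         | H : context [Rle_dec ?a ?b] |- _ => destruct (Rle_dec a b)
         end; try nra.


Definition chi {X : CompHaus} (psi : Cfun X) (s c K : R) : Cfun X :=
  cfh psi (fun y => c + K * Rmin (y - s) 0) (lip_test K s c).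
Definition theta {X : CompHaus} (psi : Cfun X) (s K : R) : Cfun X := chi psi s 0 K.

Definition cm_ax {X : CompHaus} (mu : Cfun X -> R) : Prop :=
  (forall (c : R) (phi : Cfun X), (forall x, proj1_sig phi x = c) -> mu phi = c) /\
  (forall phi psi chi : Cfun X,
     (forall x, proj1_sig chi x = Rmax (proj1_sig phi x) (proj1_sig psi x)) ->
     mu chi = Rmax (mu phi) (mu psi)).

Lemma mp_cm {X} mu : is_maxplus X mu -> cm_ax mu.
Proof. intros [h1 [h2 _]]; split; auto. Qed.
Lemma mm_cm {X} mu : is_maxmin X mu -> cm_ax mu.
Proof. intros [h1 [h2 _]]; split; auto. Qed.

Lemma cm_mono {X} (mu : Cfun X -> R) : cm_ax mu -> forall phi psi : Cfun X,
  (forall x, proj1_sig phi x <= proj1_sig psi x) -> mu phi <= mu psi.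
Proof.
  intros [h1 h2] phi psi H. rewrite (h2 phi psi psi).
  - apply Rmax_l.
  - intros x. rewrite Rmax_right; auto.
Qed.

Lemma cm_ext {X} (mu : Cfun X -> R) : cm_ax mu -> forall phi psi : Cfun X,
  (forall x, proj1_sig phi x = proj1_sig psi x) -> mu phi = mu psi.
Proof.
  intros h phi psi H. apply Rle_antisym; apply (cm_mono mu h); intros x; rewrite H; lra.
Qed.

Lemma cm_maxc {X} (mu : Cfun X -> R) : cm_ax mu -> forall (phi psi : Cfun X) c,
  (forall x, proj1_sig phi x <= Rmax (proj1_sig psi x) c) -> mu phi <= Rmax (mu psi) c.
Proof.
  intros h phi psi c H. destruct h as [h1 h2].
  pose (psi' := cfh psi (fun y => Rmax y c) ltac:(lipt)).
  pose (cst := cfh psi (fun _ => c) ltac:(lipt)).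
  assert (E : mu psi' = Rmax (mu psi) (mu cst)) by (apply h2; intros; reflexivity).
  assert (E2 : mu cst = c) by (apply h1; intros; reflexivity).
  rewrite <- E2, <- E. apply (cm_mono mu (conj h1 h2)). exact H.
Qed.

Lemma cm_const {X} (mu : Cfun X -> R) : cm_ax mu -> forall (phi : Cfun X) c,
  (forall x, proj1_sig phi x = c) -> mu phi = c.
Proof. intros [h1 _]. auto. Qed.

Lemma mp_shift {X} mu : is_maxplus X mu -> forall (phi psi : Cfun X) c,
  (forall x, proj1_sig phi x <= proj1_sig psi x + c) -> mu phi <= mu psi + c.
Proof.
  intros hm phi psi c H. pose proof (mp_cm mu hm) as hc. destruct hm as [h1 [h2 h3]].
  pose (psi' := cfh psi (fun y => c + y) ltac:(lipt)).
  assert (E : mu psi' = c + mu psi) by (apply h3; intros; reflexivity).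
  assert (mu phi <= mu psi') by (apply (cm_mono mu hc); intros x; simpl; specialize (H x); lra).
  lra.
Qed.

Lemma mm_cap {X} nu : is_maxmin X nu -> forall (phi psi : Cfun X) a b,
  a <= nu phi -> (forall x, Rmin (proj1_sig phi x) a <= Rmax (proj1_sig psi x) b) -> b < a ->
  a <= nu psi.
Proof.
  intros hm phi psi a b ha H hb. pose proof (mm_cm nu hm) as hc. destruct hm as [h1 [h2 h3]].
  pose (phi' := cfh phi (fun y => Rmin a y) ltac:(lipt)).
  assert (E : nu phi' = Rmin a (nu phi)) by (apply h3; intros; reflexivity).
  assert (nu phi' <= Rmax (nu psi) b).
  { apply (cm_maxc nu hc). intros x. simpl. rewrite Rmin_comm. apply H. }
  rewrite E in H0. rewrite Rmin_left in H0 by lra. mm.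
Qed.

Lemma cm_zero {X} (mu : Cfun X -> R) : cm_ax mu -> forall psi s c, mu (chi psi s c 0) = c.
Proof. intros h psi s c. apply (cm_const mu h). intros x. simpl. ring. Qed.

Lemma cm_le_const {X} (mu : Cfun X -> R) : cm_ax mu -> forall (phi : Cfun X) c,
  (forall x, proj1_sig phi x <= c) -> mu phi <= c.
Proof.
  intros h phi c H. pose (cst := cfh phi (fun _ => c) ltac:(lipt)).
  rewrite <- (cm_const mu h cst c) by reflexivity. apply (cm_mono mu h). exact H.
Qed.

Lemma cm_ge_const {X} (mu : Cfun X -> R) : cm_ax mu -> forall (phi : Cfun X) c,
  (forall x, c <= proj1_sig phi x) -> c <= mu phi.
Proof.
  intros h phi c H. pose (cst := cfh phi (fun _ => c) ltac:(lipt)).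
  rewrite <- (cm_const mu h cst c) by reflexivity. apply (cm_mono mu h). exact H.
Qed.



Definition A {X : CompHaus} (mu : Cfun X -> R) (psi : Cfun X) (s b : R) : Prop :=
  forall K, 0 <= K -> b <= mu (theta psi s K).
Definition P {X : CompHaus} (mu : Cfun X -> R) (phi : Cfun X) (r : R) : Prop := A mu phi r (g r).
Definition k1fun {X : CompHaus} (mu : Cfun X -> R) (phi : Cfun X) : R := sup (P mu phi).

Lemma lub_below E v r : is_lub E v -> r < v -> exists x, E x /\ r < x.
Proof.
  intros [h1 h2] h. apply NNPP. intros hn. assert (v <= r); [|lra].
  apply h2. intros x hx. destruct (Rle_or_lt x r); auto. exfalso; apply hn; eauto.
Qed.

Lemma A_le {X} mu (psi : Cfun X) s b : is_maxplus X mu -> A mu psi s b -> s + b <= mu psi.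
Proof.
  intros hm H. specialize (H 1 ltac:(lra)).
  assert (mu (theta psi s 1) <= mu psi + - s).
  { apply (mp_shift mu hm). intros x. simpl. mm. }
  lra.
Qed.

Lemma A_bnp {X} mu (psi : Cfun X) s b : is_maxplus X mu -> A mu psi s b -> b <= 0.
Proof.
  intros hm H. specialize (H 0 ltac:(lra)). unfold theta in H.
  rewrite (cm_zero mu (mp_cm mu hm)) in H. exact H.
Qed.

Lemma theta_anti {X} mu (phi : Cfun X) r K K' : cm_ax mu -> 0 <= K -> K <= K' ->
  mu (theta phi r K') <= mu (theta phi r K).
Proof. intros h h1 h2. apply (cm_mono mu h). intros x; simpl. mm. Qed.

Lemma A_down {X} mu (phi : Cfun X) r r' b b' : cm_ax mu -> r' <= r -> b' <= b ->
  A mu phi r b -> A mu phi r' b'.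
Proof.
  intros h h1 h2 H K hK. specialize (H K hK).
  assert (mu (theta phi r K) <= mu (theta phi r' K)) by (apply (cm_mono mu h); intros x; simpl; mm).
  lra.
Qed.

Lemma P_down {X} mu (phi : Cfun X) r r' : cm_ax mu -> r' <= r -> P mu phi r -> P mu phi r'.
Proof. intros h h1. apply A_down; auto. apply g_le; auto. Qed.

Lemma P_bounded {X} mu (phi : Cfun X) M r : cm_ax mu ->
  (forall x, proj1_sig phi x <= M) -> P mu phi r -> r <= M.
Proof.
  intros h hM H. destruct (Rle_or_lt r M) as [|hr]; auto. exfalso.
  pose proof (g_neg r).
  set (K := (1 - g r)/(r - M)).
  assert (hK : 0 <= K) by (unfold K; apply Rlt_le, Rdiv_lt_0_compat; lra).
  specialize (H K hK).
  assert (mu (theta phi r K) <= g r - 1).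
  { apply (cm_le_const mu h). intros x; simpl. specialize (hM x).
    assert (K * (r - M) = 1 - g r) by (unfold K; field; lra). mm. }
  lra.
Qed.

Lemma P_nonempty {X} mu (phi : Cfun X) M : cm_ax mu ->
  (forall x, - M <= proj1_sig phi x) -> P mu phi (- M).
Proof.
  intros h hM K hK. pose proof (g_neg (-M)).
  assert (0 <= mu (theta phi (-M) K)); [|lra].
  apply (cm_ge_const mu h). intros x. simpl. specialize (hM x). mm.
Qed.

Lemma P_closed {X} mu (phi : Cfun X) v : is_maxplus X mu -> is_lub (P mu phi) v -> P mu phi v.
Proof.
  intros hm hl K hK. pose proof (mp_cm mu hm) as hc. apply le_eps. intros e he.
  set (r := v - e/(K+1)).
  assert (hr : r < v) by (unfold r; assert (0 < e/(K+1)) by (apply Rdiv_lt_0_compat; lra); lra).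
  destruct (lub_below _ _ _ hl hr) as [x [hx hrx]].
  assert (hPr : P mu phi r) by (apply (P_down mu phi x r hc); auto; lra).
  specialize (hPr K hK).
  assert (mu (theta phi r K) <= mu (theta phi v K) + K * (v - r)).
  { apply (mp_shift mu hm). intros y; simpl. mm. }
  pose proof (g_lip r v ltac:(lra)).
  assert ((K+1) * (v - r) = e) by (unfold r; field; lra).
  nra.
Qed.

Lemma P_lub {X} mu (phi : Cfun X) : is_maxplus X mu -> is_lub (P mu phi) (k1fun mu phi).
Proof.
  intros hm. pose proof (mp_cm mu hm) as hc. destruct (cf_bounded phi) as [M hM].
  apply sup_spec.
  - exists M. intros r hr. apply (P_bounded mu phi M r hc); auto.
    intros x; specialize (hM x); destruct (abs_facts (proj1_sig phi x)); lra.
  - exists (-M). apply (P_nonempty mu phi M hc).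
    intros x; specialize (hM x); destruct (abs_facts (proj1_sig phi x)); lra.
Qed.

Lemma P_char {X} mu (phi : Cfun X) r : is_maxplus X mu -> (P mu phi r <-> r <= k1fun mu phi).
Proof.
  intros hm. pose proof (P_lub mu phi hm) as hl. split.
  - intros h. apply (proj1 hl). auto.
  - intros h. apply (P_down mu phi (k1fun mu phi)); auto. apply mp_cm; auto.
    apply P_closed; auto.
Qed.

Lemma k1_eq {X} mu (phi : Cfun X) v : (forall r, P mu phi r <-> r <= v) -> k1fun mu phi = v.
Proof.
  intros H. apply sup_eq. split.
  - intros r hr. apply H; auto.
  - intros b hb. apply hb. apply H. lra.
Qed.

Lemma P_const {X} mu (phi : Cfun X) d r : cm_ax mu -> (forall x, proj1_sig phi x = d) ->
  (P mu phi r <-> r <= d).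
Proof.
  intros h hd. split.
  - intros H. apply (P_bounded mu phi d r h); auto. intros x; rewrite hd; lra.
  - intros hr K hK. pose proof (g_neg r).
    assert (0 <= mu (theta phi r K)); [|lra].
    apply (cm_ge_const mu h). intros x. simpl. rewrite hd. mm.
Qed.

Lemma P_max {X} mu (phi psi ch : Cfun X) r : cm_ax mu ->
  (forall x, proj1_sig ch x = Rmax (proj1_sig phi x) (proj1_sig psi x)) ->
  (P mu ch r <-> P mu phi r \/ P mu psi r).
Proof.
  intros h hch. assert (E : forall K, 0 <= K -> mu (theta ch r K) = Rmax (mu (theta phi r K)) (mu (theta psi r K))).
  { intros K hK. apply (proj2 h). intros x. simpl. rewrite hch. mm. }
  split.
  - intros H. apply NNPP. intros hn. apply not_or_and in hn. destruct hn as [n1 n2].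
    unfold P, A in n1, n2.
    apply not_all_ex_not in n1. destruct n1 as [K1 n1].
    apply not_all_ex_not in n2. destruct n2 as [K2 n2].
    apply imply_to_and in n1. apply imply_to_and in n2. destruct n1 as [k1 n1]. destruct n2 as [k2 n2].
    set (K := Rmax K1 K2).
    pose proof (theta_anti mu phi r K1 K h k1 (Rmax_l K1 K2)).
    pose proof (theta_anti mu psi r K2 K h k2 (Rmax_r K1 K2)).
    assert (0 <= K) by (unfold K; pose proof (Rmax_l K1 K2); lra).
    specialize (H K H2). rewrite E in H by auto. mm.
  - intros [H|H] K hK; specialize (H K hK); rewrite E by auto; mm.
Qed.

Lemma P_min {X} mu (phi ch : Cfun X) c r : cm_ax mu ->
  (forall x, proj1_sig ch x = Rmin c (proj1_sig phi x)) ->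
  (P mu ch r <-> r <= c /\ P mu phi r).
Proof.
  intros h hch. split.
  - intros H. split.
    + apply (P_bounded mu ch c r h); auto. intros x; rewrite hch; apply Rmin_l.
    + intros K hK. specialize (H K hK).
      assert (mu (theta ch r K) <= mu (theta phi r K)); [|lra].
      apply (cm_mono mu h). intros x; simpl. rewrite hch. mm.
  - intros [hr H] K hK. specialize (H K hK).
    rewrite (cm_ext mu h (theta ch r K) (theta phi r K)); auto.
    intros x; simpl. rewrite hch. mm.
Qed.

Lemma k1_maxmin {X} mu : is_maxplus X mu -> is_maxmin X (k1fun mu).
Proof.
  intros hm. pose proof (mp_cm mu hm) as hc. split; [|split].
  - intros c phi H. apply k1_eq. intros r. apply P_const; auto.
  - intros phi psi ch H. apply k1_eq. intros r. rewrite (P_max mu phi psi ch r hc H).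
    rewrite !P_char by auto. mm.
  - intros c phi ch H. apply k1_eq. intros r. rewrite (P_min mu phi ch c r hc H).
    rewrite !P_char by auto. mm.
Qed.



Definition B {X : CompHaus} (nu : Cfun X -> R) (psi : Cfun X) (s c : R) : Prop :=
  forall K, 0 <= K -> c <= nu (chi psi s c K).
Definition S {X : CompHaus} (nu : Cfun X -> R) (psi : Cfun X) (u : R) : Prop :=
  exists s c, B nu psi s c /\ u = s + g c.
Definition k2fun {X : CompHaus} (nu : Cfun X -> R) (psi : Cfun X) : R := sup (S nu psi).

Lemma B_ge {X} nu (psi : Cfun X) s c : is_maxmin X nu -> B nu psi s c -> Rmin s c <= nu psi.
Proof.
  intros hn H. apply le_eps. intros e he.
  set (m := Rmin s c - e).
  assert (hm1 : m <= s - e) by (unfold m; pose proof (Rmin_l s c); lra).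
  assert (hm2 : m <= c - e) by (unfold m; pose proof (Rmin_r s c); lra).
  set (K2 := (c - m + e)/e).
  assert (hK2 : K2 * e = c - m + e) by (unfold K2; field; lra).
  assert (0 <= K2) by (unfold K2; apply Rlt_le, Rdiv_lt_0_compat; lra).
  specialize (H K2 H0).
  assert (m <= nu psi); [|unfold m in *; lra].
  apply (mm_cap nu hn (chi psi s c K2) psi m (m - e)); [lra| |lra].
  intros x; simpl. set (y := proj1_sig psi x). mm.
Qed.

Lemma B_of_ge {X} nu (psi : Cfun X) s c : is_maxmin X nu -> c <= nu psi -> s < c -> B nu psi s c.
Proof.
  intros hn h1 h2 K hK. apply (mm_cap nu hn psi (chi psi s c K) c s); auto.
  intros x; simpl. set (y := proj1_sig psi x). mm.
Qed.

Lemma B_lower {X} nu (psi : Cfun X) s c c' d : is_maxmin X nu -> B nu psi s c -> c' <= c -> 0 < d ->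
  B nu psi (s - d) c'.
Proof.
  intros hn H h1 h2 K hK.
  set (K2 := (c - c' + 1)/d).
  assert (hK2 : K2 * d = c - c' + 1) by (unfold K2; field; lra).
  assert (0 <= K2) by (unfold K2; apply Rlt_le, Rdiv_lt_0_compat; lra).
  specialize (H K2 H0).
  apply (mm_cap nu hn (chi psi s c K2) (chi psi (s - d) c' K) c' (c' - 1)); [lra| |lra].
  intros x; simpl. set (y := proj1_sig psi x). mm.
Qed.

Lemma B_mono_s {X} nu (psi : Cfun X) s s' c : cm_ax nu -> s' <= s -> B nu psi s c -> B nu psi s' c.
Proof.
  intros h h1 H K hK. specialize (H K hK).
  assert (nu (chi psi s c K) <= nu (chi psi s' c K)); [|lra].
  apply (cm_mono nu h). intros x; simpl. mm.
Qed.

Lemma B_ub {X} nu (psi : Cfun X) s c M : cm_ax nu -> (forall x, proj1_sig psi x <= M) ->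
  B nu psi s c -> s <= M.
Proof.
  intros h hM H. destruct (Rle_or_lt s M) as [|hs]; auto. exfalso.
  set (K := 1/(s - M)).
  assert (hK : K * (s - M) = 1) by (unfold K; field; lra).
  assert (0 <= K) by (unfold K; apply Rlt_le, Rdiv_lt_0_compat; lra).
  specialize (H K H0).
  assert (nu (chi psi s c K) <= c - 1); [|lra].
  apply (cm_le_const nu h). intros x; simpl. specialize (hM x). mm.
Qed.

Lemma B_lb {X} nu (psi : Cfun X) c M : cm_ax nu -> (forall x, - M <= proj1_sig psi x) ->
  B nu psi (- M) c.
Proof.
  intros h hM K hK. rewrite (cm_const nu h (chi psi (-M) c K) c); [lra|].
  intros x; simpl. specialize (hM x). mm.
Qed.

Lemma chi_anti {X} nu (phi : Cfun X) s c K K' : cm_ax nu -> 0 <= K -> K <= K' ->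
  nu (chi phi s c K') <= nu (chi phi s c K).
Proof. intros h h1 h2. apply (cm_mono nu h). intros x; simpl. mm. Qed.

Lemma B_max {X} nu (phi psi ch : Cfun X) s c : cm_ax nu ->
  (forall x, proj1_sig ch x = Rmax (proj1_sig phi x) (proj1_sig psi x)) ->
  (B nu ch s c <-> B nu phi s c \/ B nu psi s c).
Proof.
  intros h hch. assert (E : forall K, 0 <= K -> nu (chi ch s c K) = Rmax (nu (chi phi s c K)) (nu (chi psi s c K))).
  { intros K hK. apply (proj2 h). intros x. simpl. rewrite hch. mm. }
  split.
  - intros H. apply NNPP. intros hn. apply not_or_and in hn. destruct hn as [n1 n2].
    unfold B in n1, n2.
    apply not_all_ex_not in n1. destruct n1 as [K1 n1].
    apply not_all_ex_not in n2. destruct n2 as [K2 n2].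
    apply imply_to_and in n1. apply imply_to_and in n2. destruct n1 as [k1 n1]. destruct n2 as [k2 n2].
    set (K := Rmax K1 K2).
    pose proof (chi_anti nu phi s c K1 K h k1 (Rmax_l K1 K2)).
    pose proof (chi_anti nu psi s c K2 K h k2 (Rmax_r K1 K2)).
    assert (0 <= K) by (unfold K; pose proof (Rmax_l K1 K2); lra).
    specialize (H K H2). rewrite E in H by auto. mm.
  - intros [H|H] K hK; specialize (H K hK); rewrite E by auto; mm.
Qed.

Lemma B_shift {X} nu (psi ch : Cfun X) d s c : cm_ax nu ->
  (forall x, proj1_sig ch x = d + proj1_sig psi x) ->
  (B nu ch s c <-> B nu psi (s - d) c).
Proof.
  intros h hch. split; intros H K hK; specialize (H K hK);
    [rewrite (cm_ext nu h (chi psi (s-d) c K) (chi ch s c K))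
    |rewrite (cm_ext nu h (chi ch s c K) (chi psi (s-d) c K))]; auto;
    intros x; simpl; rewrite hch; replace (d + proj1_sig psi x - s) with (proj1_sig psi x - (s - d)) by ring;
    reflexivity.
Qed.

Lemma B_const {X} nu (phi : Cfun X) d s c : cm_ax nu -> (forall x, proj1_sig phi x = d) ->
  (B nu phi s c <-> s <= d).
Proof.
  intros h hd. split.
  - apply (B_ub nu phi s c d h). intros x; rewrite hd; lra.
  - intros hs. apply (B_mono_s nu phi (-(-d)) s c h); [lra|]. apply B_lb; auto. intros x; rewrite hd; lra.
Qed.

Lemma theta_helper K r t y : 0 < K -> t <= 0 ->
  Rmin (0 + K * Rmin (y - r) 0 - t) 0 = K * Rmin (y - (r + t/K)) 0.
Proof.
  intros hK ht. set (u := t / K). assert (t = K * u) by (unfold u; field; lra).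
  assert (u <= 0). { unfold u. unfold Rdiv. assert (0 < /K) by (apply Rinv_0_lt_compat; lra). nra. }
  rewrite H. mm.
Qed.

Lemma B_theta {X} nu (phi : Cfun X) r K t c : cm_ax nu -> 0 < K -> t <= 0 ->
  (B nu (theta phi r K) t c <-> B nu phi (r + t/K) c).
Proof.
  intros h hK ht. split.
  - intros H K'' hK''. assert (0 <= K''/K) by (unfold Rdiv; assert (0 < /K) by (apply Rinv_0_lt_compat; lra); nra).
    specialize (H _ H0).
    rewrite (cm_ext nu h (chi phi (r + t/K) c K'') (chi (theta phi r K) t c (K''/K))); auto.
    intros x; simpl. rewrite theta_helper by auto. field. lra.
  - intros H K' hK'. assert (0 <= K' * K) by nra.
    specialize (H _ H0).
    rewrite (cm_ext nu h (chi (theta phi r K) t c K') (chi phi (r + t/K) c (K' * K))); auto.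
    intros x; simpl. rewrite theta_helper by auto. ring.
Qed.

Lemma B_t_nonpos {X} nu (phi : Cfun X) r K t c : cm_ax nu -> 0 <= K ->
  B nu (theta phi r K) t c -> t <= 0.
Proof.
  intros h hK H. apply (B_ub nu (theta phi r K) t c 0 h); auto. intros x; simpl. mm.
Qed.

Lemma S_lub {X} nu (psi : Cfun X) : is_maxmin X nu -> is_lub (S nu psi) (k2fun nu psi).
Proof.
  intros hn. pose proof (mm_cm nu hn) as hc. destruct (cf_bounded psi) as [M hM].
  apply sup_spec.
  - exists M. intros u [s [c [hB ->]]]. pose proof (g_neg c).
    assert (s <= M); [|lra]. apply (B_ub nu psi s c M hc); auto.
    intros x; specialize (hM x); destruct (abs_facts (proj1_sig psi x)); lra.
  - exists (-M + g 0). exists (-M), 0. split; auto. apply B_lb; auto.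
    intros x; specialize (hM x); destruct (abs_facts (proj1_sig psi x)); lra.
Qed.

Lemma S_ge {X} nu (psi : Cfun X) s c : is_maxmin X nu -> B nu psi s c -> s + g c <= k2fun nu psi.
Proof. intros hn H. apply (proj1 (S_lub nu psi hn)). exists s, c; auto. Qed.

Lemma lub_union E E1 E2 a b : is_lub E1 a -> is_lub E2 b -> (forall u, E u <-> E1 u \/ E2 u) ->
  is_lub E (Rmax a b).
Proof.
  intros [h1 h2] [h3 h4] H. split.
  - intros u hu. apply H in hu. destruct hu as [hu|hu]; [apply h1 in hu|apply h3 in hu]; mm.
  - intros m hm. assert (a <= m) by (apply h2; intros u hu; apply hm, H; auto).
    assert (b <= m) by (apply h4; intros u hu; apply hm, H; auto). mm.
Qed.

Lemma lub_shift E E1 a d : is_lub E1 a -> (forall u, E u <-> E1 (u - d)) -> is_lub E (d + a).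
Proof.
  intros [h1 h2] H. split.
  - intros u hu. apply H in hu. apply h1 in hu. lra.
  - intros m hm. assert (a <= m - d); [|lra]. apply h2. intros u hu.
    assert (E (u + d)) by (apply H; replace (u + d - d) with u by ring; auto).
    apply hm in H0. lra.
Qed.

Lemma k2_maxplus {X} nu : is_maxmin X nu -> is_maxplus X (k2fun nu).
Proof.
  intros hn. pose proof (mm_cm nu hn) as hc. split; [|split].
  - intros d phi H. apply sup_eq. split.
    + intros u [s [c [hB ->]]]. apply (B_const nu phi d s c hc H) in hB. pose proof (g_neg c). lra.
    + intros b hb. apply le_eps. intros e he. apply hb. exists d, (ginv (- e)).
      split. apply (B_const nu phi d d _ hc H); lra. rewrite g_ginv; lra.
  - intros phi psi ch H. apply sup_eq. apply (lub_union _ (S nu phi) (S nu psi)); try apply S_lub; auto.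
    intros u. split.
    + intros [s [c [hB ->]]]. apply (B_max nu phi psi ch s c hc H) in hB.
      destruct hB; [left|right]; exists s, c; auto.
    + intros [[s [c [hB ->]]]|[s [c [hB ->]]]]; exists s, c; split; auto;
        apply (B_max nu phi psi ch s c hc H); auto.
  - intros d phi ch H. apply sup_eq. apply (lub_shift _ (S nu phi)); try apply S_lub; auto.
    intros u. split.
    + intros [s [c [hB ->]]]. exists (s - d), c. split.
      apply (B_shift nu phi ch d s c hc H); auto. ring.
    + intros [s [c [hB hu]]]. exists (s + d), c. split.
      apply (B_shift nu phi ch d (s + d) c hc H). replace (s + d - d) with s by ring; auto. lra.
Qed.



Lemma A_mono_fun {X} mu (phi psi : Cfun X) s b : cm_ax mu ->
  (forall x, proj1_sig phi x <= proj1_sig psi x) -> A mu phi s b -> A mu psi s b.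
Proof.
  intros h hle H K hK. specialize (H K hK).
  assert (mu (theta phi s K) <= mu (theta psi s K)); [|lra].
  apply (cm_mono mu h). intros x; simpl. specialize (hle x). mm.
Qed.

Lemma grid_claim {X} mu a e : is_maxplus X mu -> 0 < e -> forall N (psi : Cfun X),
  (forall x, proj1_sig psi x <= a + INR N * e) ->
  mu psi <= a \/ exists s b, A mu psi s b /\ mu psi <= s + b + e.
Proof.
  intros hm he. pose proof (mp_cm mu hm) as hc. induction N as [|N IH]; intros psi hpsi.
  - left. apply (cm_le_const mu hc). intros x; specialize (hpsi x); simpl in hpsi; lra.
  - rewrite S_INR in hpsi. set (sN := a + INR N * e).
    destruct (classic (forall K, 0 <= K -> mu psi <= sN + e + mu (theta psi sN K))) as [Hy|Hn].
    + right. exists sN, (mu psi - sN - e). split; [|lra].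
      intros K hK. specialize (Hy K hK). lra.
    + apply not_all_ex_not in Hn. destruct Hn as [K Hn]. apply imply_to_and in Hn. destruct Hn as [hK Hn].
      pose (psim := cfh psi (fun y => Rmin y sN) ltac:(lipt)).
      pose (psis := cfh psi (fun y => sN + e + K * Rmin (y - sN) 0) ltac:(lipt)).
      pose (ch := cfh psi (fun y => Rmax (Rmin y sN) (sN + e + K * Rmin (y - sN) 0)) ltac:(lipt)).
      assert (E : mu ch = Rmax (mu psim) (mu psis)) by (apply (proj2 hc); intros; reflexivity).
      assert (h1 : mu psi <= mu ch).
      { apply (cm_mono mu hc). intros x. simpl. specialize (hpsi x). unfold sN in *. mm. }
      assert (h2 : mu psis <= mu (theta psi sN K) + (sN + e)).
      { apply (mp_shift mu hm). intros x; simpl. lra. }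
      assert (h3 : mu psi <= mu psim) by (rewrite E in h1; mm).
      assert (hle : forall x, proj1_sig psim x <= proj1_sig psi x) by (intros x; simpl; apply Rmin_l).
      destruct (IH psim) as [hl|[s [b [hA hb]]]].
      * intros x; simpl. apply Rmin_r.
      * left; lra.
      * right. exists s, b. split; [|lra]. apply (A_mono_fun mu psim psi s b hc hle hA).
Qed.

Lemma grid {X} mu (psi : Cfun X) e : is_maxplus X mu -> 0 < e ->
  exists s b, A mu psi s b /\ mu psi <= s + b + e.
Proof.
  intros hm he. destruct (cf_bounded psi) as [M hM].
  set (a := mu psi - 1).
  destruct (INR_unbounded ((M - a)/e)) as [N hN].
  assert (INR N * e >= M - a).
  { apply Rmult_gt_compat_r with (r := e) in hN; [|lra].
    replace ((M - a) / e * e) with (M - a) in hN by (field; lra). lra. }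
  destruct (grid_claim mu a e hm he N psi) as [h|h]; auto.
  - intros x; specialize (hM x); destruct (abs_facts (proj1_sig psi x)); lra.
  - unfold a in h; lra.
Qed.

Lemma B_k1 {X} mu (psi : Cfun X) s c : is_maxplus X mu ->
  (B (k1fun mu) psi s c <-> A mu psi s (g c)).
Proof.
  intros hm. pose proof (mp_cm mu hm) as hc.
  assert (E : forall K K', 0 <= K -> mu (theta (chi psi s c K) c K') = mu (theta psi s (K' * K))).
  { intros K K' hK. apply (cm_ext mu hc). intros x; simpl. mm. }
  split.
  - intros H K' hK'. specialize (H 1 ltac:(lra)). apply P_char in H; auto.
    specialize (H K' hK'). rewrite E in H by lra. rewrite Rmult_1_r in H. exact H.
  - intros H K hK. apply P_char; auto. intros K' hK'. rewrite E by lra. apply H. nra.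
Qed.

Lemma iso1 {X} mu (psi : Cfun X) : is_maxplus X mu -> k2fun (k1fun mu) psi = mu psi.
Proof.
  intros hm. pose proof (mp_cm mu hm) as hc. apply sup_eq. split.
  - intros u [s [c [hB ->]]]. apply B_k1 in hB; auto. apply (A_le mu psi s (g c) hm hB).
  - intros m hmb. apply le_eps. intros e he.
    destruct (grid mu psi (e/2) hm ltac:(lra)) as [s [b [hA hb]]].
    pose proof (A_bnp mu psi s b hm hA).
    set (b' := b - e/2).
    assert (hA' : A mu psi s (g (ginv b'))).
    { rewrite g_ginv by (unfold b'; lra). apply (A_down mu psi s s b b' hc); auto; unfold b'; lra. }
    assert (s + g (ginv b') <= m).
    { apply hmb. exists s, (ginv b'). split; auto. apply B_k1; auto. }
    rewrite g_ginv in H0 by (unfold b'; lra). unfold b' in H0. lra.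
Qed.

Lemma iso2 {X} nu (phi : Cfun X) : is_maxmin X nu -> k1fun (k2fun nu) phi = nu phi.
Proof.
  intros hn. pose proof (mm_cm nu hn) as hc. pose proof (k2_maxplus nu hn) as hk.
  pose proof (mp_cm _ hk) as hkc.
  assert (Ha : forall r, r <= nu phi -> P (k2fun nu) phi r).
  { intros r hr K hK. destruct hK as [hK|hK].
    - apply le_eps. intros e he.
      assert (hB : B nu phi (r - e/K) r).
      { apply B_of_ge; auto. assert (0 < e/K) by (apply Rdiv_lt_0_compat; lra). lra. }
      replace (r - e/K) with (r + (-e)/K) in hB by (field; lra).
      apply B_theta in hB; auto; try lra.
      pose proof (S_ge nu _ _ _ hn hB). lra.
    - subst K. unfold theta. rewrite (cm_zero _ hkc). pose proof (g_neg r). lra. }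
  assert (Hb : forall r, P (k2fun nu) phi r -> r <= nu phi).
  { intros r H. destruct (Rle_or_lt r (nu phi)) as [|hr]; auto. exfalso.
    set (u := nu phi) in *.
    set (K := Rmax 1 (g u / (u - r))).
    assert (hK1 : 1 <= K) by (apply Rmax_l).
    assert (hK2 : K * (u - r) <= g u).
    { assert (g u / (u - r) <= K) by apply Rmax_r.
      assert (g u / (u - r) * (u - r) = g u) by (field; lra). nra. }
    assert (k2fun nu (theta phi r K) <= g u).
    { apply (proj2 (S_lub nu _ hn)). intros v [s [c [hB ->]]].
      pose proof (B_t_nonpos nu phi r K s c hc ltac:(lra) hB) as hs.
      apply B_theta in hB; auto; try lra.
      apply B_ge in hB; auto. pose proof (g_neg c).
      destruct (Rle_or_lt c u) as [hcu|hcu].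
      - pose proof (g_le c u hcu). lra.
      - assert (r + s/K <= u) by (fold u in hB; unfold Rmin in hB; destruct (Rle_dec (r + s/K) c); lra).
        assert (s <= K * (u - r)).
        { assert (s / K * K = s) by (field; lra). nra. }
        lra. }
    specialize (H K ltac:(lra)). pose proof (g_lt u r hr). lra. }
  apply sup_eq. split.
  - intros r hr. apply Hb; auto.
  - intros b hb. apply hb. apply Ha. lra.
Qed.



Definition sat {T : Type} (m : T -> R) (l : list (T * (R -> Prop))) : Prop :=
  Forall (fun p => snd p (m (fst p))) l.
Definition opl {T : Type} (l : list (T * (R -> Prop))) : Prop := Forall (fun p => R_open (snd p)) l.

Lemma cont_tests {T : Type} (PA PB : (T -> R) -> Prop) (F : {m | PA m} -> {n | PB n}) :
  (forall m (phi : T) (U : R -> Prop), R_open U -> U (proj1_sig (F m) phi) ->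
     exists l, opl l /\ sat (proj1_sig m) l /\
       forall m', sat (proj1_sig m') l -> U (proj1_sig (F m') phi)) ->
  continuous (pointwise_open PA) (pointwise_open PB) F.
Proof.
  intros H W hW m hm. destruct (hW _ hm) as [l [h1 [h2 h3]]].
  assert (exists l', opl l' /\ sat (proj1_sig m) l' /\
            forall m', sat (proj1_sig m') l' -> Forall (fun p => snd p (proj1_sig (F m') (fst p))) l)
    as [l' [g1 [g2 g3]]].
  { clear h3. induction l as [|[phi U] l IH].
    - exists []. split; [constructor|split; [constructor|intros; constructor]].
    - inversion h1; subst. inversion h2; subst. destruct (IH H3 H5) as [l1 [a1 [a2 a3]]].
      destruct (H m phi U H2 H4) as [l2 [b1 [b2 b3]]].
      exists (l2 ++ l1). unfold opl, sat in *. repeat split.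
      + apply Forall_app; auto.
      + apply Forall_app; auto.
      + intros m' hm'. apply Forall_app in hm'. destruct hm'. constructor; simpl; auto. }
  exists l'. repeat split; auto.
Qed.

Lemma open_lt a : R_open (fun y => y < a).
Proof. intros x hx. exists (a - x). split; [lra|]. intros y hy. destruct (abs_facts (y - x)). lra. Qed.
Lemma open_gt a : R_open (fun y => a < y).
Proof. intros x hx. exists (x - a). split; [lra|]. intros y hy. destruct (abs_facts (y - x)). lra. Qed.

Lemma ball_in U v y e : (forall z, Rabs (z - v) < e -> U z) -> v - e < y -> y < v + e -> U y.
Proof. intros H h1 h2. apply H. apply Rabs_def1; lra. Qed.

Definition k1map (X : CompHaus) (m : IX X) : JX X :=
  exist _ (k1fun (proj1_sig m)) (k1_maxmin _ (proj2_sig m)).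
Definition k2map (X : CompHaus) (m : JX X) : IX X :=
  exist _ (k2fun (proj1_sig m)) (k2_maxplus _ (proj2_sig m)).

Lemma k1_cont X : continuous (I_open X) (J_open X) (k1map X).
Proof.
  apply cont_tests. intros [mu hm] phi U hU hv. simpl in *.
  pose proof (mp_cm mu hm) as hc.
  set (v := k1fun mu phi) in *. destruct (hU v hv) as [e [he He]].
  set (r1 := v + e/2).
  assert (n1 : ~ P mu phi r1) by (rewrite P_char by auto; fold v; unfold r1; intro; lra).
  unfold P, A in n1. apply not_all_ex_not in n1. destruct n1 as [K1 n1].
  apply imply_to_and in n1. destruct n1 as [hK1 n1]. apply Rnot_le_lt in n1.
  set (r2 := v - e/4). set (r3 := v - e/2).
  assert (p2 : P mu phi r2) by (apply (proj2 (P_char mu phi r2 hm)); fold v; unfold r2; lra).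
  pose proof (g_neg r3).
  set (K0 := (1 - g r3)/(r2 - r3)).
  assert (hK0 : K0 * (r2 - r3) = 1 - g r3) by (unfold K0, r2, r3; field; lra).
  assert (hK0p : 0 <= K0) by (unfold K0; apply Rlt_le, Rdiv_lt_0_compat; [lra|unfold r2, r3; lra]).
  exists [(theta phi r1 K1, fun y => y < g r1); (theta phi r2 K0, fun y => g r3 < y)].
  split; [|split].
  - repeat constructor; simpl. apply open_lt. apply open_gt.
  - repeat constructor; simpl; auto. specialize (p2 K0 hK0p). pose proof (g_lt r3 r2 ltac:(unfold r2, r3; lra)). lra.
  - intros [mu' hm'] hs. simpl. pose proof (mp_cm mu' hm') as hc'.
    apply Forall_cons_iff in hs as [t1 hs]. apply Forall_cons_iff in hs as [t2 _]. simpl in t1, t2.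
    assert (u1 : k1fun mu' phi <= r1).
    { destruct (Rle_or_lt (k1fun mu' phi) r1) as [|h]; auto. exfalso.
      assert (P mu' phi r1) by (rewrite P_char by auto; lra).
      specialize (H0 K1 hK1). lra. }
    assert (u2 : r3 <= k1fun mu' phi).
    { rewrite <- P_char by auto. intros K hK.
      assert (mu' (theta phi r2 K0) <= Rmax (mu' (theta phi r3 K)) (- (K0 * (r2 - r3)))).
      { apply (cm_maxc mu' hc'). intros x; simpl. assert (r3 < r2) by (unfold r2, r3; lra). mm. }
      rewrite hK0 in H0. mm. }
    apply (ball_in U v _ e He); unfold r1, r3 in *; lra.
Qed.

Lemma k2_upper_claim {X} nu (psi : Cfun X) v e : is_maxmin X nu -> k2fun nu psi = v -> 0 < e ->
  forall N, exists l, opl l /\ sat nu l /\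
    forall nu', is_maxmin X nu' -> sat nu' l -> forall t c, B nu' psi t c ->
      t < v + e/2 + INR N * (e/8) -> t + g c <= v + e/2.
Proof.
  intros hn hv he. induction N as [|N IH].
  - exists []. split; [constructor|split; [constructor|]].
    intros nu' hn' _ t c _ ht. simpl in ht. pose proof (g_neg c). lra.
  - destruct IH as [l [o1 [s1 h1]]].
    set (s := v + e/2 + INR N * (e/8)).
    pose proof (pos_INR N).
    assert (hs : v + e/2 <= s) by (unfold s; nra).
    set (cs := ginv (v - s + e/4)).
    assert (hgcs : g cs = v - s + e/4) by (unfold cs; apply g_ginv; lra).
    assert (nB : ~ B nu psi (s - e/8) cs).
    { intros hB. pose proof (S_ge nu psi _ _ hn hB). lra. }
    unfold B in nB. apply not_all_ex_not in nB. destruct nB as [Ki nB].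
    apply imply_to_and in nB. destruct nB as [hKi nB]. apply Rnot_le_lt in nB.
    exists ((chi psi (s - e/8) cs Ki, fun y => y < cs) :: l). split; [|split].
    + constructor; auto. apply open_lt.
    + constructor; auto.
    + intros nu' hn' hs' t c hB ht. apply Forall_cons_iff in hs' as [t1 t3]. simpl in t1.
      destruct (Rlt_or_le t s) as [hts|hts].
      * apply (h1 nu' hn' t3 t c hB hts).
      * rewrite S_INR in ht. fold s in ht.
        destruct (Rle_or_lt c cs) as [hc|hc].
        -- pose proof (g_le c cs hc). unfold s in *. nra.
        -- exfalso. assert (hB' : B nu' psi s c) by (apply (B_mono_s nu' psi t s c (mm_cm _ hn')); auto).
           apply (B_lower nu' psi s c cs (e/8) hn') in hB'; try lra.
           specialize (hB' Ki hKi). lra.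
Qed.

Lemma k2_cont X : continuous (J_open X) (I_open X) (k2map X).
Proof.
  apply cont_tests. intros [nu hn] psi U hU hv. simpl in *.
  pose proof (mm_cm nu hn) as hc.
  set (v := k2fun nu psi) in *. destruct (hU v hv) as [e [he He]].
  assert (hl : is_lub (S nu psi) v) by (apply S_lub; auto).
  destruct (lub_below _ _ (v - e/2) hl ltac:(lra)) as [u [[s [c [hB ->]]] hu]].
  set (K0 := (e/8 + 1)/(e/8)).
  assert (hK0 : K0 * (e/8) = e/8 + 1) by (unfold K0; field; lra).
  assert (hK0p : 0 <= K0) by (unfold K0; apply Rlt_le, Rdiv_lt_0_compat; lra).
  destruct (cf_bounded psi) as [M hM].
  destruct (INR_unbounded ((M - v) / (e/8))) as [N hN].
  assert (hNe : INR N * (e/8) > M - v).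
  { apply Rmult_gt_compat_r with (r := e/8) in hN; [|lra].
    replace ((M - v) / (e/8) * (e/8)) with (M - v) in hN by (field; lra). lra. }
  destruct (k2_upper_claim nu psi v e hn eq_refl he N) as [l [o1 [s1 h1]]].
  exists ((chi psi s c K0, fun y => c - e/16 < y) :: l). split; [|split].
  - constructor; auto. apply open_gt.
  - constructor; auto. simpl. specialize (hB K0 hK0p). lra.
  - intros [nu' hn'] hs'. simpl. apply Forall_cons_iff in hs' as [t1 t3]. simpl in t1.
    assert (lo : s - e/8 + g (c - e/8) <= k2fun nu' psi).
    { apply S_ge; auto. intros K hK.
      apply (mm_cap nu' hn' (chi psi s c K0) (chi psi (s - e/8) (c - e/8) K) (c - e/8) (c - e/8 - 1));
        [lra| |lra].
      intros x; simpl. set (y := proj1_sig psi x). mm. }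
    pose proof (g_lip (c - e/8) c ltac:(lra)).
    assert (up : k2fun nu' psi <= v + e/2).
    { apply (proj2 (S_lub nu' psi hn')). intros w [t [c' [hB' ->]]].
      apply (h1 nu' hn' t3 t c' hB').
      assert (t <= M). { apply (B_ub nu' psi t c' M (mm_cm _ hn')); auto.
        intros x; specialize (hM x); destruct (abs_facts (proj1_sig psi x)); lra. }
      lra. }
    apply (ball_in U v _ e He); lra.
Qed.

Lemma chi_precomp (X Y : CompHaus) (f : cmap X Y) (psi : Cfun Y) s c K :
  precomp f (chi psi s c K) = chi (precomp f psi) s c K.
Proof. unfold precomp, chi, cfh. simpl. apply subset_eq_compat. reflexivity. Qed.

Lemma sig_ext {T : Type} (Q : T -> Prop) (a b : {x | Q x}) : proj1_sig a = proj1_sig b -> a = b.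
Proof. destruct a, b. simpl. intros ->. apply subset_eq_compat. reflexivity. Qed.

Theorem mainTheorem13 :
  exists k : forall X : CompHaus, IX X -> JX X,
    (forall X : CompHaus, is_homeomorphism (I_open X) (J_open X) (k X)) /\
    (forall (X Y : CompHaus) (f : cmap X Y) (mu : IX X),
       Jmap f (k X mu) = k Y (Imap f mu)).
Proof.
  exists k1map. split.
  - intros X. exists (k2map X). split; [|split; [|split]].
    + intros [mu hm]. apply sig_ext. simpl. extensionality psi. apply iso1; auto.
    + intros [nu hn]. apply sig_ext. simpl. extensionality phi. apply iso2; auto.
    + apply k1_cont.
    + apply k2_cont.
  - intros X Y f [mu hm]. apply sig_ext. simpl. extensionality psi.
    unfold k1fun. f_equal. extensionality r. apply propositional_extensionality.
    unfold P, A, theta. split; intros H K hK; specialize (H K hK);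
      cbv beta in *; first [rewrite chi_precomp; exact H | rewrite <- chi_precomp; exact H].
Qed.
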